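(* The operator $\Gamma$ defined below is the Choi–Jamiolkowski operator of a separable CPTP map from $\mathbf L(\mathcal H_1\otimes\mathcal H_3\otimes\mathcal H_5)$ to $\mathbf L(\mathcal H_2\otimes\mathcal H_4\otimes\mathcal H_6)$, and this map cannot be implemented by any finite-round three-party LOCC protocol in which the first party acts $\mathcal H_1\to\mathcal H_2$, the second $\mathcal H_3\to\mathcal H_4$ and the third $\mathcal H_5\to\mathcal H_6$.
   Context: $\mathcal H_1,\mathcal H_3,\mathcal H_5\cong\mathbb C^2$ and $\mathcal H_2,\mathcal H_4,\mathcal H_6\cong\mathbb C^2\otimes\mathbb C^2$. On each pair ($\mathcal H_1\otimes\mathcal H_2$, $\mathcal H_3\otimes\mathcal H_4$, $\mathcal H_5\otimes\mathcal H_6$) define $|\mathbf 0\rangle=|0\rangle|00\rangle$, $|\mathbf 1\rangle=|1\rangle|01\rangle$, $|\mathbf 2\rangle=|+\rangle|10\rangle$, $|\mathbf 3\rangle=|-\rangle|11\rangle$, with $|\pm\rangle=(|0\rangle\pm|1\rangle)/\sqrt2$, and $[\mathbf x]:=|\mathbf x\rangle\langle\mathbf x|$. Let $T=\{(0,0,0),(1,2,0),(2,3,0),(3,1,0),(0,3,1),(1,1,1),(2,0,1),(3,2,1),(0,1,2),(1,3,2),(2,2,2),(3,0,2),(0,2,3),(1,0,3),(2,1,3),(3,3,3)\}$ and $\Gamma=\frac12\sum_{(a,b,c)\in T}[\mathbf a]\otimes[\mathbf b]\otimes[\mathbf c]$. The Choi–Jamiolkowski operator of a linear map $\mathcal M:\mathbf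 L(\mathcal H_{in})\to\mathbf L(\mathcal H_{out})$ is $\sum_{k,l}|k\rangle\langle l|\otimes\mathcal M(|k\rangle\langle l|)$ in the computational basis of $\mathcal H_{in}$. A map is separable if it has Kraus operators of product form $E^{(1)}_k\otimes E^{(2)}_k\otimes E^{(3)}_k$. Finite-round three-party LOCC: finitely many rounds in which one party at a time applies a local quantum instrument and broadcasts its outcome, with later operations allowed to depend on earlier outcomes, all outcomes summed at the end. *)

(* Defs.v *)
From HB Require Import structures.
From mathcomp Require Import all_boot all_order all_algebra.
From mathcomp Require Import complex.
From mathcomp Require Import reals Rstruct.
Set Implicit Arguments. Unset Strict Implicit. Unset Printing Implicit Defensive.
Import Order.TTheory GRing.Theory Num.Theory.
Local Open Scope ring_scope.

Definition C : numClosedFieldType := (Rdefinitions.R)[i].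

(* Finite-dimensional Hilbert spaces are C^I for a finite type I of basis   *)
(* labels (the computational basis).  An operator H_I -> H_J is a J x I     *)
(* matrix, represented as a function of (row, column).  Tensor products of  *)
(* spaces correspond to products of basis-label types.                      *)
Definition vec (I : finType) := I -> C.
Definition op (J I : finType) := J -> I -> C.

Definition zeroop (J I : finType) : op J I := fun _ _ => 0.
Definition addop (J I : finType) (A B : op J I) : op J I := fun j i => A j i + B j i.
Definition scaleop (J I : finType) (a : C) (A : op J I) : op J I := fun j i => a * A j i.
Definition sumop (J I : finType) (n : nat) (F : 'I_n -> op J I) : op J I :=
  fun j i => \sum_(k < n) F k j i.
Definition mulop (K J I : finType) (A : op K J) (B : op J I) : op K I :=
  fun k i => \sum_(j : J) A k j * B j i.
Definition adjop (J I : finType) (A : op J I) : op I J := fun i j => (A j i)^*.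
Definition idop (I : finType) : op I I := fun i j => (i == j)%:R.
Definition tensop (J1 I1 J2 I2 : finType) (A : op J1 I1) (B : op J2 I2)
  : op (J1 * J2)%type (I1 * I2)%type := fun j i => A j.1 i.1 * B j.2 i.2.
Definition traceop (I : finType) (X : op I I) : C := \sum_(i : I) X i i.
Definition ketbra (I : finType) (v w : vec I) : op I I := fun i j => v i * (w j)^*.
Definition conjop (J I : finType) (K : op J I) (X : op I I) : op J J :=
  mulop (mulop K X) (adjop K).

Definition psd (I : finType) (X : op I I) : Prop :=
  (forall i j, X i j = (X j i)^*) /\
  (forall v : vec I, 0 <= \sum_(i : I) \sum_(j : I) (v i)^* * X i j * v j).

Definition qmap (I O : finType) := op I I -> op O O.

Definition linear_qmap (I O : finType) (Phi : qmap I O) : Prop :=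
  forall (a : C) (X Y : op I I), Phi (addop (scaleop a X) Y) = addop (scaleop a (Phi X)) (Phi Y).

(* id_n (x) Phi acting on L(C^n (x) H_I) *)
Definition ampl (n : nat) (I O : finType) (Phi : qmap I O)
  (X : op ('I_n * I)%type ('I_n * I)%type) : op ('I_n * O)%type ('I_n * O)%type :=
  fun x y => Phi (fun p q => X (x.1, p) (y.1, q)) x.2 y.2.

Definition completely_positive (I O : finType) (Phi : qmap I O) : Prop :=
  forall (n : nat) (X : op ('I_n * I)%type ('I_n * I)%type), psd X -> psd (ampl Phi X).

Definition trace_preserving (I O : finType) (Phi : qmap I O) : Prop :=
  forall X : op I I, traceop (Phi X) = traceop X.

Definition CPTP (I O : finType) (Phi : qmap I O) : Prop :=
  [/\ linear_qmap Phi, completely_positive Phi & trace_preserving Phi].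

(* Choi-Jamiolkowski operator  sum_{k,l} |k><l| (x) Phi(|k><l|)  on H_in (x) H_out *)
Definition unitop (I : finType) (k l : I) : op I I := fun a b => ((a == k) && (b == l))%:R.
Definition choi (I O : finType) (Phi : qmap I O) : op (I * O)%type (I * O)%type :=
  fun x y => Phi (unitop x.1 y.1) x.2 y.2.

(* Tripartite maps: party k has input space H_{Ik} and output space H_{Ok}; *)
(* the global spaces are (H_I1 (x) H_I2) (x) H_I3 etc.                      *)
Definition tri (A B D : finType) : finType := ((A * B) * D)%type.

Definition tens3 (J1 I1 J2 I2 J3 I3 : finType)
  (A : op J1 I1) (B : op J2 I2) (D : op J3 I3) : op (tri J1 J2 J3) (tri I1 I2 I3) :=
  tensop (tensop A B) D.

Definition separable3 (I1 I2 I3 O1 O2 O3 : finType)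
  (Phi : qmap (tri I1 I2 I3) (tri O1 O2 O3)) : Prop :=
  exists (n : nat) (E1 : 'I_n -> op O1 I1) (E2 : 'I_n -> op O2 I2) (E3 : 'I_n -> op O3 I3),
    forall X, Phi X = sumop (fun k => conjop (tens3 (E1 k) (E2 k) (E3 k)) X).

(* A local quantum instrument of a party with current space H_A, new space *)
(* H_A', and outcomes 'I_n is given by, for each outcome i, a CP map in     *)
(* Kraus form  X |-> sum_(j < m i) K i j X (K i j)^dagger, the instrument   *)
(* being trace preserving overall.                                          *)
Definition instrument_complete (A A' : finType) (n : nat) (m : 'I_n -> nat)
  (K : forall i : 'I_n, 'I_(m i) -> op A' A) : Prop :=
  sumop (fun i => sumop (fun j => mulop (adjop (K i j)) (K i j))) = @idop A.

(* A protocol tree: the current local spaces of the three parties are the    *)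
(* indices A B D; at each node one party applies a local instrument and      *)
(* broadcasts the outcome i, and the rest of the protocol (next i) may       *)
(* depend on it.  A leaf (Done) is only allowed when the local spaces are    *)
(* the prescribed output spaces O1 O2 O3.  Trees are finite, so every        *)
(* protocol has finitely many rounds.                                        *)
Inductive locc_protocol (O1 O2 O3 : finType) : finType -> finType -> finType -> Type :=
| Done : locc_protocol O1 O2 O3 O1 O2 O3
| Round1 (A B D A' : finType) (n : nat) (m : 'I_n -> nat)
    (K : forall i : 'I_n, 'I_(m i) -> op A' A) of instrument_complete K &
    (forall i : 'I_n, locc_protocol O1 O2 O3 A' B D) : locc_protocol O1 O2 O3 A B D
| Round2 (A B D B' : finType) (n : nat) (m : 'I_n -> nat)
    (K : forall i : 'I_n, 'I_(m i) -> op B' B) of instrument_complete K &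
    (forall i : 'I_n, locc_protocol O1 O2 O3 A B' D) : locc_protocol O1 O2 O3 A B D
| Round3 (A B D D' : finType) (n : nat) (m : 'I_n -> nat)
    (K : forall i : 'I_n, 'I_(m i) -> op D' D) of instrument_complete K &
    (forall i : 'I_n, locc_protocol O1 O2 O3 A B D') : locc_protocol O1 O2 O3 A B D.

(* The map implemented by a protocol, all outcomes summed at the end. *)
Fixpoint locc_map (O1 O2 O3 A B D : finType) (P : locc_protocol O1 O2 O3 A B D)
  {struct P} : qmap (tri A B D) (tri O1 O2 O3) :=
  match P in locc_protocol _ _ _ A B D return qmap (tri A B D) (tri O1 O2 O3) with
  | Done => fun X => X
  | Round1 A B D A' n m K _ next => fun X =>
      sumop (fun i => locc_map (next i)
        (sumop (fun j => conjop (tens3 (K i j) (@idop B) (@idop D)) X)))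
  | Round2 A B D B' n m K _ next => fun X =>
      sumop (fun i => locc_map (next i)
        (sumop (fun j => conjop (tens3 (@idop A) (K i j) (@idop D)) X)))
  | Round3 A B D D' n m K _ next => fun X =>
      sumop (fun i => locc_map (next i)
        (sumop (fun j => conjop (tens3 (@idop A) (@idop B) (K i j)) X)))
  end.

Definition finite_round_LOCC (I1 I2 I3 O1 O2 O3 : finType)
  (Phi : qmap (tri I1 I2 I3) (tri O1 O2 O3)) : Prop :=
  exists P : locc_protocol O1 O2 O3 I1 I2 I3, forall X, locc_map P X = Phi X.

(* H1,H3,H5 = C^2 (labels 'I_2);  H2,H4,H6 = C^2 (x) C^2 (labels 'I_2*'I_2) *)
Definition Q : finType := 'I_2.
Definition QQ : finType := ('I_2 * 'I_2)%type.
Definition Pair : finType := (Q * QQ)%type.     (* H_odd (x) H_even *)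

Definition e0 : vec Q := fun i => (val i == 0%N)%:R.
Definition e1 : vec Q := fun i => (val i == 1%N)%:R.
Definition eplus : vec Q := fun i => (sqrtC 2)^-1 * (e0 i + e1 i).
Definition eminus : vec Q := fun i => (sqrtC 2)^-1 * (e0 i - e1 i).
Definition e2 (b1 b2 : nat) : vec QQ := fun jk => ((val jk.1 == b1) && (val jk.2 == b2))%:R.

Definition bket (x : nat) : vec Pair := fun p =>
  match x with
  | 0%N => e0 p.1 * e2 0 0 p.2
  | 1%N => e1 p.1 * e2 0 1 p.2
  | 2%N => eplus p.1 * e2 1 0 p.2
  | 3%N => eminus p.1 * e2 1 1 p.2
  | _ => 0
  end.
Definition bproj (x : nat) : op Pair Pair := ketbra (bket x) (bket x).

Definition Tset : seq (nat * nat * nat) :=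
  [:: (0,0,0); (1,2,0); (2,3,0); (3,1,0);
      (0,3,1); (1,1,1); (2,0,1); (3,2,1);
      (0,1,2); (1,3,2); (2,2,2); (3,0,2);
      (0,2,3); (1,0,3); (2,1,3); (3,3,3)]%N.

(* Gamma on (H1 (x) H2) (x) (H3 (x) H4) (x) (H5 (x) H6) *)
Definition Gamma : op (tri Pair Pair Pair) (tri Pair Pair Pair) :=
  fun x y => 2^-1 * \sum_(t <- Tset) tens3 (bproj t.1.1) (bproj t.1.2) (bproj t.2) x y.

Definition Hin : finType := tri Q Q Q.
Definition Hout : finType := tri QQ QQ QQ.

(* canonical identification (H1 H3 H5) (x) (H2 H4 H6) ~ (H1 H2)(H3 H4)(H5 H6) *)
Definition regroup (x : (Hin * Hout)%type) : tri Pair Pair Pair :=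
  (((x.1.1.1, x.2.1.1), (x.1.1.2, x.2.1.2)), (x.1.2, x.2.2)).

Definition GammaChoi : op (Hin * Hout)%type (Hin * Hout)%type :=
  fun x y => Gamma (regroup x) (regroup y).

(* Main.v *)
Require Import Defs.
From HB Require Import structures.
From mathcomp Require Import all_boot all_order all_algebra.
From mathcomp Require Import complex.
From mathcomp Require Import reals Rstruct.
From mathcomp Require Import ring zify.
From Stdlib Require Import FunctionalExtensionality.
Set Implicit Arguments. Unset Strict Implicit. Unset Printing Implicit Defensive.
Import Order.TTheory GRing.Theory Num.Theory.
Local Open Scope ring_scope.

Lemma op_ext (J I : finType) (A B : op J I) : (forall j i, A j i = B j i) -> A = B.
Proof. move=> H; apply: functional_extensionality => j; apply: functional_extensionality => i; exact: H. Qed.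

Lemma sum_pair (X Y : finType) (F : X * Y -> C) :
  \sum_(p : X * Y) F p = \sum_(x : X) \sum_(y : Y) F (x, y).
Proof. by rewrite pair_bigA /=; apply: eq_bigr => -[]. Qed.


Lemma sum_tri (A B D : finType) (F : tri A B D -> C) :
  \sum_(p : tri A B D) F p = \sum_(a : A) \sum_(b : B) \sum_(d : D) F ((a, b), d).
Proof. by rewrite sum_pair sum_pair; apply: eq_bigr => a _; apply: eq_bigr. Qed.

Lemma sum_tri_prod (A B D : finType) (f : A -> C) (g : B -> C) (h : D -> C) :
  \sum_(p : tri A B D) f p.1.1 * g p.1.2 * h p.2 =
  (\sum_a f a) * (\sum_b g b) * (\sum_d h d).
Proof.
rewrite sum_pair sum_pair /= -mulrA mulr_suml; apply: eq_bigr => a _.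
rewrite mulr_suml mulr_sumr; apply: eq_bigr => b _.
rewrite mulr_sumr mulr_sumr; apply: eq_bigr => d _; by rewrite !mulrA.
Qed.

Definition rr (J I : finType) (L : op J I) (o : J) (u : vec I) : C := \sum_i L o i * u i.
Definition nrm (J I : finType) (L : op J I) (u : vec I) : C := \sum_o rr L o u * (rr L o u)^*.
Definition Nk (J I : finType) (Ms : seq (op J I)) (u : vec I) : C := \sum_(m <- Ms) nrm m u.
Definition prodvec (I1 I2 I3 : finType) (u1 : vec I1) (u2 : vec I2) (u3 : vec I3)
  : vec (tri I1 I2 I3) := fun i => u1 i.1.1 * u2 i.1.2 * u3 i.2.

Lemma rr_tens3 (J1 I1 J2 I2 J3 I3 : finType) (m1 : op J1 I1) (m2 : op J2 I2) (m3 : op J3 I3)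
  o u1 u2 u3 : rr (tens3 m1 m2 m3) o (prodvec u1 u2 u3) = rr m1 o.1.1 u1 * rr m2 o.1.2 u2 * rr m3 o.2 u3.
Proof.
rewrite /rr -sum_tri_prod; apply: eq_bigr => i _.
rewrite /tens3 /tensop /prodvec; ring.
Qed.

Lemma nrm_tens3 (J1 I1 J2 I2 J3 I3 : finType) (m1 : op J1 I1) (m2 : op J2 I2) (m3 : op J3 I3)
  u1 u2 u3 : nrm (tens3 m1 m2 m3) (prodvec u1 u2 u3) = nrm m1 u1 * nrm m2 u2 * nrm m3 u3.
Proof.
rewrite /nrm -sum_tri_prod; apply: eq_bigr => o _.
rewrite rr_tens3 !rmorphM /=; ring.
Qed.

Lemma rr_mulop (K J I : finType) (A : op K J) (B : op J I) k u :
  rr (mulop A B) k u = rr A k (fun j => rr B j u).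
Proof.
rewrite /rr /mulop.
under eq_bigr do rewrite mulr_suml.
rewrite exchange_big /=; apply: eq_bigr => j _.
by rewrite mulr_sumr; apply: eq_bigr => i _; rewrite mulrA.
Qed.

Lemma nrm_mulop (K J I : finType) (A : op K J) (B : op J I) u :
  nrm (mulop A B) u = nrm A (fun j => rr B j u).
Proof. by rewrite /nrm; apply: eq_bigr => k _; rewrite rr_mulop. Qed.

Lemma kraus_complete (A A' : finType) (n : nat) (m : 'I_n -> nat)
  (K : forall i : 'I_n, 'I_(m i) -> op A' A) (v : vec A) :
  instrument_complete K ->
  \sum_(i < n) \sum_(j < m i) nrm (K i j) v = \sum_a v a * (v a)^*.
Proof.
move=> HK.
have E : forall a b : A, \sum_(i < n) \sum_(j < m i) \sum_o (K i j o b)^* * K i j o a = (b == a)%:R.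
  by move=> a b; have := congr1 (fun f => f b a) HK; rewrite /sumop /mulop /adjop /idop.
have E2 : forall i j, nrm (K i j) v = \sum_a \sum_b v a * (v b)^* * (\sum_o (K i j o a)^* * K i j o b)^*.
  move=> i j; rewrite /nrm /rr.
  under eq_bigr do rewrite rmorph_sum mulr_suml.
  rewrite exchange_big /=; apply: eq_bigr => a _.
  under eq_bigr do rewrite mulr_sumr.
  rewrite exchange_big /=; apply: eq_bigr => b _.
  rewrite rmorph_sum mulr_sumr; apply: eq_bigr => o _.
  rewrite !rmorphM /= !conjCK; ring.
under eq_bigr do under eq_bigr do rewrite E2.
have SW : forall (G : forall i : 'I_n, 'I_(m i) -> A -> C),
   \sum_(i < n) \sum_(j < m i) \sum_a G i j a = \sum_a \sum_(i < n) \sum_(j < m i) G i j a.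
  move=> G; under eq_bigr do rewrite exchange_big /=.
  by rewrite exchange_big.
have SW2 : forall (G : forall i : 'I_n, 'I_(m i) -> A -> A -> C),
   \sum_(i < n) \sum_(j < m i) \sum_a \sum_b G i j a b = \sum_a \sum_b \sum_(i < n) \sum_(j < m i) G i j a b.
  by move=> G; rewrite SW; apply: eq_bigr => a _; rewrite SW.
have H3 : forall a b, \sum_(i < n) \sum_(j < m i) v a * (v b)^* * (\sum_o (K i j o a)^* * K i j o b)^*
    = v a * (v b)^* * ((a == b)%:R)^*.
  move=> a b; rewrite -(E b a) rmorph_sum mulr_sumr; apply: eq_bigr => i _.
  by rewrite rmorph_sum mulr_sumr.
rewrite SW2; apply: eq_bigr => a _.
under eq_bigr do rewrite H3.
rewrite (bigD1 a) //= big1 ?addr0 ?eqxx ?rmorph1 ?mulr1 //.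
by move=> b nb; rewrite eq_sym (negbTE nb) rmorph0 mulr0.
Qed.



Definition triples (O1 O2 O3 I1 I2 I3 : finType) (M1s : seq (op O1 I1)) (M2s : seq (op O2 I2))
  (M3s : seq (op O3 I3)) : seq (op (tri O1 O2 O3) (tri I1 I2 I3)) :=
  flatten [seq [seq tens3 m1 m2 m3 | m2 <- M2s, m3 <- M3s] | m1 <- M1s].

Fixpoint leaves (O1 O2 O3 A B D : finType) (P : locc_protocol O1 O2 O3 A B D) (I1 I2 I3 : finType)
  {struct P} : seq (op A I1) -> seq (op B I2) -> seq (op D I3) -> seq (op (tri O1 O2 O3) (tri I1 I2 I3)) :=
  match P in locc_protocol _ _ _ A B D
    return seq (op A I1) -> seq (op B I2) -> seq (op D I3) -> seq (op (tri O1 O2 O3) (tri I1 I2 I3)) with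
  | Done => fun M1s M2s M3s => triples M1s M2s M3s
  | Round1 A B D A' n m K _ next => fun M1s M2s M3s =>
      flatten [seq leaves (next i)
                 [seq mulop (K i j) x | x <- M1s, j <- index_enum 'I_(m i)] M2s M3s
              | i <- index_enum 'I_n]
  | Round2 A B D B' n m K _ next => fun M1s M2s M3s =>
      flatten [seq leaves (next i) M1s
                 [seq mulop (K i j) x | x <- M2s, j <- index_enum 'I_(m i)] M3s
              | i <- index_enum 'I_n]
  | Round3 A B D D' n m K _ next => fun M1s M2s M3s =>
      flatten [seq leaves (next i) M1s M2s
                 [seq mulop (K i j) x | x <- M3s, j <- index_enum 'I_(m i)]
              | i <- index_enum 'I_n]
  end.

Lemma sum_triples (O1 O2 O3 I1 I2 I3 : finType) (M1s : seq (op O1 I1)) (M2s : seq (op O2 I2))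
  (M3s : seq (op O3 I3)) (F : op (tri O1 O2 O3) (tri I1 I2 I3) -> C) :
  \sum_(L <- triples M1s M2s M3s) F L =
  \sum_(m1 <- M1s) \sum_(m2 <- M2s) \sum_(m3 <- M3s) F (tens3 m1 m2 m3).
Proof.
rewrite /triples big_flatten big_map /=; apply: eq_bigr => m1 _.
by rewrite (big_allpairs_dep (h := fun m2 m3 => tens3 m1 m2 m3)).
Qed.

Lemma Nk_step (J J' I : finType) (n : nat) (m : 'I_n -> nat)
  (K : forall i : 'I_n, 'I_(m i) -> op J' J) (Ms : seq (op J I)) (u : vec I) :
  instrument_complete K ->
  \sum_(i < n) Nk [seq mulop (K i j) x | x <- Ms, j <- index_enum 'I_(m i)] u = Nk Ms u.
Proof.
move=> HK; rewrite /Nk.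
under eq_bigr do rewrite (big_allpairs_dep (h := fun x j => mulop (K _ j) x)) /=.
rewrite exchange_big /=; apply: eq_bigr => x _.
under eq_bigr do under eq_bigr do rewrite nrm_mulop.
by rewrite (kraus_complete _ HK).
Qed.

Lemma sum3_prod (X Y Z : Type) (s : seq X) (t : seq Y) (w : seq Z) (f : X -> C) (g : Y -> C) (h : Z -> C) :
  \sum_(x <- s) \sum_(y <- t) \sum_(z <- w) f x * g y * h z = (\sum_(x <- s) f x) * (\sum_(y <- t) g y) * (\sum_(z <- w) h z).
Proof.
rewrite -mulrA big_distrl /=; apply: eq_bigr => x _.
rewrite big_distrl big_distrr /=; apply: eq_bigr => y _.
rewrite big_distrr big_distrr /=; apply: eq_bigr => z _.
by rewrite mulrA.
Qed.

Lemma leaves_TP (O1 O2 O3 A B D : finType) (P : locc_protocol O1 O2 O3 A B D) :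
  forall (I1 I2 I3 : finType) M1s M2s M3s (u1 : vec I1) (u2 : vec I2) (u3 : vec I3),
  \sum_(L <- leaves P M1s M2s M3s) nrm L (prodvec u1 u2 u3) = Nk M1s u1 * Nk M2s u2 * Nk M3s u3.
Proof.
elim: P => {A B D} [|A B D A' n m K HK next IH|A B D A' n m K HK next IH|A B D A' n m K HK next IH]
  I1 I2 I3 M1s M2s M3s u1 u2 u3 /=.
- rewrite sum_triples /Nk.
  under eq_bigr do under eq_bigr do under eq_bigr do rewrite nrm_tens3.
  rewrite sum3_prod //.
- rewrite big_flatten big_map /=.
  under eq_bigr do rewrite IH.
  by rewrite -!big_distrl /= (Nk_step _ _ HK).
- rewrite big_flatten big_map /=.
  under eq_bigr do rewrite IH.
  by rewrite -big_distrl -big_distrr /= (Nk_step _ _ HK).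
- rewrite big_flatten big_map /=.
  under eq_bigr do rewrite IH.
  by rewrite -big_distrr /= (Nk_step _ _ HK).
Qed.

Definition csum (J I : finType) (Ls : seq (op J I)) (X : op I I) : op J J :=
  fun a b => \sum_(L <- Ls) conjop L X a b.

Lemma conjopE (J I : finType) (K : op J I) (Y : op I I) a b :
  conjop K Y a b = \sum_i \sum_j K a i * Y i j * (K b j)^*.
Proof.
rewrite /conjop /mulop /adjop exchange_big /=; apply: eq_bigr => i _.
by rewrite mulr_suml.
Qed.

Lemma sum4_swap (I J P Q : finType) (F : I -> J -> P -> Q -> C) :
  \sum_i \sum_j \sum_p \sum_q F i j p q = \sum_p \sum_q \sum_i \sum_j F i j p q.
Proof.
under eq_bigr do rewrite exchange_big /=.
under eq_bigr do under eq_bigr do rewrite exchange_big /=.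
rewrite exchange_big /=; apply: eq_bigr => p _.
by rewrite exchange_big.
Qed.

Lemma conjop_conjop (K J I : finType) (A : op K J) (B : op J I) (X : op I I) :
  conjop A (conjop B X) = conjop (mulop A B) X.
Proof.
apply: op_ext => a b; rewrite !conjopE /mulop.
have L : forall i j, A a i * conjop B X i j * (A b j)^* =
   \sum_p \sum_q A a i * B i p * X p q * (B j q)^* * (A b j)^*.
  move=> i j; rewrite conjopE mulr_sumr mulr_suml; apply: eq_bigr => p _.
  rewrite mulr_sumr mulr_suml; apply: eq_bigr => q _; ring.
have R : forall p q, (\sum_i A a i * B i p) * X p q * (\sum_j A b j * B j q)^* =
   \sum_i \sum_j A a i * B i p * X p q * (B j q)^* * (A b j)^*.
  move=> p q; rewrite rmorph_sum !mulr_suml; apply: eq_bigr => i _.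
  rewrite mulr_sumr; apply: eq_bigr => j _; rewrite rmorphM /=; ring.
under eq_bigr do under eq_bigr do rewrite L.
under [RHS]eq_bigr do under eq_bigr do rewrite R.
by rewrite sum4_swap.
Qed.

Lemma mulop_tens3 (K1 J1 I1 K2 J2 I2 K3 J3 I3 : finType)
  (A : op K1 J1) (B : op K2 J2) (D : op K3 J3) (A' : op J1 I1) (B' : op J2 I2) (D' : op J3 I3) :
  mulop (tens3 A B D) (tens3 A' B' D') = tens3 (mulop A A') (mulop B B') (mulop D D').
Proof.
apply: op_ext => k i; rewrite /mulop /tens3 /tensop /= -sum_tri_prod.
by apply: eq_bigr => j _; ring.
Qed.

Lemma mulop_id_l (J I : finType) (M : op J I) : mulop (@idop J) M = M.
Proof.
apply: op_ext => a b; rewrite /mulop /idop (bigD1 a) //= eqxx mul1r big1 ?addr0 //.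
by move=> j /negbTE nj; rewrite eq_sym nj mul0r.
Qed.

Lemma csum_cons_map (J K I : finType) (A : op K J) (Ls : seq (op J I)) X :
  conjop A (csum Ls X) = csum [seq mulop A L | L <- Ls] X.
Proof.
apply: op_ext => a b; rewrite [RHS]/csum big_map.
under [RHS]eq_bigr do rewrite -conjop_conjop conjopE.
rewrite conjopE /csum /=.
have E : forall i j, A a i * (\sum_(L <- Ls) conjop L X i j) * (A b j)^* =
   \sum_(L <- Ls) A a i * conjop L X i j * (A b j)^*.
  by move=> i j; rewrite mulr_sumr mulr_suml.
under eq_bigr do under eq_bigr do rewrite E.
under eq_bigr do rewrite exchange_big /=.
by rewrite exchange_big.
Qed.

Lemma sumop_csum (J I : finType) (n : nat) (F : 'I_n -> seq (op J I)) X :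
  sumop (fun i => csum (F i) X) = csum (flatten [seq F i | i <- index_enum 'I_n]) X.
Proof.
by apply: op_ext => a b; rewrite /sumop /csum big_flatten big_map.
Qed.

Lemma csum_triples (O1 O2 O3 I1 I2 I3 : finType) (M1s : seq (op O1 I1)) (M2s : seq (op O2 I2))
  (M3s : seq (op O3 I3)) X a b :
  csum (triples M1s M2s M3s) X a b =
  \sum_(m1 <- M1s) \sum_(m2 <- M2s) \sum_(m3 <- M3s) conjop (tens3 m1 m2 m3) X a b.
Proof. by rewrite /csum sum_triples. Qed.

Lemma step1 (A' A B D I1 I2 I3 : finType) (p : nat) (K : 'I_p -> op A' A)
  (M1s : seq (op A I1)) (M2s : seq (op B I2)) (M3s : seq (op D I3)) X :
  sumop (fun j => conjop (tens3 (K j) (@idop B) (@idop D)) (csum (triples M1s M2s M3s) X))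
  = csum (triples [seq mulop (K j) x | x <- M1s, j <- index_enum 'I_p] M2s M3s) X.
Proof.
apply: op_ext => a b; rewrite /sumop.
under eq_bigr do rewrite csum_cons_map /csum big_map sum_triples.
rewrite csum_triples (big_allpairs_dep (h := fun x j => mulop (K j) x)) /=.
rewrite exchange_big /=; apply: eq_bigr => m1 _.
apply: eq_bigr => j _; apply: eq_bigr => m2 _; apply: eq_bigr => m3 _.
by rewrite mulop_tens3 !mulop_id_l.
Qed.

Lemma step2 (B' A B D I1 I2 I3 : finType) (p : nat) (K : 'I_p -> op B' B)
  (M1s : seq (op A I1)) (M2s : seq (op B I2)) (M3s : seq (op D I3)) X :
  sumop (fun j => conjop (tens3 (@idop A) (K j) (@idop D)) (csum (triples M1s M2s M3s) X))
  = csum (triples M1s [seq mulop (K j) x | x <- M2s, j <- index_enum 'I_p] M3s) X.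
Proof.
apply: op_ext => a b; rewrite /sumop.
under eq_bigr do rewrite csum_cons_map /csum big_map sum_triples.
rewrite csum_triples.
rewrite exchange_big /=; apply: eq_bigr => m1 _.
rewrite (big_allpairs_dep (h := fun x j => mulop (K j) x)) /=.
rewrite exchange_big /=; apply: eq_bigr => m2 _.
apply: eq_bigr => j _; apply: eq_bigr => m3 _.
by rewrite mulop_tens3 !mulop_id_l.
Qed.

Lemma step3 (D' A B D I1 I2 I3 : finType) (p : nat) (K : 'I_p -> op D' D)
  (M1s : seq (op A I1)) (M2s : seq (op B I2)) (M3s : seq (op D I3)) X :
  sumop (fun j => conjop (tens3 (@idop A) (@idop B) (K j)) (csum (triples M1s M2s M3s) X))
  = csum (triples M1s M2s [seq mulop (K j) x | x <- M3s, j <- index_enum 'I_p]) X.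
Proof.
apply: op_ext => a b; rewrite /sumop.
under eq_bigr do rewrite csum_cons_map /csum big_map sum_triples.
rewrite csum_triples.
rewrite exchange_big /=; apply: eq_bigr => m1 _.
rewrite exchange_big /=; apply: eq_bigr => m2 _.
rewrite (big_allpairs_dep (h := fun x j => mulop (K j) x)) /=.
rewrite exchange_big /=; apply: eq_bigr => m3 _.
apply: eq_bigr => j _.
by rewrite mulop_tens3 !mulop_id_l.
Qed.

Lemma map_leaves (O1 O2 O3 A B D : finType) (P : locc_protocol O1 O2 O3 A B D) :
  forall (I1 I2 I3 : finType) (M1s : seq (op A I1)) (M2s : seq (op B I2)) (M3s : seq (op D I3)) X,
  locc_map P (csum (triples M1s M2s M3s) X) = csum (leaves P M1s M2s M3s) X.
Proof.
elim: P => {A B D} [|A B D A' n m K HK next IH|A B D A' n m K HK next IH|A B D A' n m K HK next IH]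
  I1 I2 I3 M1s M2s M3s X //=.
- rewrite -sumop_csum; congr sumop; apply: functional_extensionality => i.
  by rewrite step1 IH.
- rewrite -sumop_csum; congr sumop; apply: functional_extensionality => i.
  by rewrite step2 IH.
- rewrite -sumop_csum; congr sumop; apply: functional_extensionality => i.
  by rewrite step3 IH.
Qed.


Definition tv (u : nat) : vec Q := fun i =>
  match u with
  | 0%N => (val i == 0%N)%:R
  | 1%N => (val i == 1%N)%:R
  | 2%N => 1
  | _ => if val i == 0%N then 1 else -1
  end.
Definition perp (a : nat) : nat :=
  match a with 0%N => 1%N | 1%N => 0%N | 2%N => 3%N | _ => 2%N end.
Definition lab (o : QQ) : nat := (2 * val o.1 + val o.2)%N.
Definition lab3 (o : Hout) : nat * nat * nat := (lab o.1.1, lab o.1.2, lab o.2).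
Definition bad (o : Hout) (u1 u2 u3 : nat) : bool :=
  [|| lab3 o \notin Tset, u1 == perp (lab o.1.1), u2 == perp (lab o.1.2) | u3 == perp (lab o.2)].
Definition good (L : op Hout Hin) : Prop :=
  forall o u1 u2 u3, bad o u1 u2 u3 -> rr L o (prodvec (tv u1) (tv u2) (tv u3)) = 0.

Lemma lab_lt4 o : (lab o < 4)%N.
Proof. case: o => [[a Ha] [b Hb]] /=; rewrite /lab /=; lia. Qed.

Lemma sum2 (F : Q -> C) : \sum_(i : Q) F i = F ord0 + F (lift ord0 ord0).
Proof. by rewrite /Q big_ord_recl big_ord_recl big_ord0 addr0. Qed.

Lemma bket_zero (x v : nat) (o : QQ) : (x < 4)%N -> (lab o != x) || (v == perp x) ->
  \sum_(i : Q) tv v i * bket x (i, o) = 0.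
Proof.
move=> Hx /orP [Hne|/eqP->].
- rewrite big1 // => i _.
  move: Hne; case: o => [[[|[|o1]] H1] [[|[|o2]] H2]] //;
  case: x Hx => [|[|[|[|x]]]] //= _ _; rewrite /e2 /=; ring.
- rewrite sum2; case: x Hx => [|[|[|[|x]]]] //= _;
  rewrite /e0 /e1 /eplus /eminus /=; ring.
Qed.

Lemma psum_seq_eq0 (T : Type) (s : seq T) (F : T -> C) :
  (forall x, 0 <= F x) -> \sum_(x <- s) F x = 0 -> forall x, List.In x s -> F x = 0.
Proof.
move=> Hp; elim: s => [|y s IH] //= H x.
rewrite big_cons in H; move/eqP: H; rewrite paddr_eq0 //; last first.
  by rewrite sumr_ge0.
case/andP=> /eqP Hy /eqP Hs [<-//|xs].
exact: IH.
Qed.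

Lemma sum_seq_ne0 (T : Type) (s : seq T) (F : T -> C) :
  \sum_(x <- s) F x != 0 -> exists x, List.In x s /\ F x != 0.
Proof.
elim: s => [|y s IH]; first by rewrite big_nil eqxx.
rewrite big_cons; case: (eqVneq (F y) 0) => Hy.
  rewrite Hy add0r => /IH [x [xs Fx]]; exists x; split => //; by right.
by move=> _; exists y; split => //; left.
Qed.

Lemma In_cat (T : Type) (x : T) s1 s2 : List.In x (s1 ++ s2) <-> List.In x s1 \/ List.In x s2.
Proof. exact: List.in_app_iff. Qed.

Lemma In_flatten (T : Type) (x : T) (ss : seq (seq T)) :
  List.In x (flatten ss) <-> exists s, List.In s ss /\ List.In x s.
Proof.
elim: ss => [|s ss IH] /=; first by split => // -[s []].
rewrite In_cat IH; split.
  by case=> [H|[s' [H1 H2]]]; [exists s; split; [left|] | exists s'; split; [right|]].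
by case=> s' [[<-|H1] H2]; [left | right; exists s'].
Qed.

Lemma In_map (T U : Type) (f : T -> U) (y : U) (s : seq T) :
  List.In y (map f s) <-> exists x, List.In x s /\ y = f x.
Proof.
elim: s => [|x s IH] /=; first by split => // -[x []].
rewrite IH; split.
  by case=> [<-|[x' [H1 ->]]]; [exists x; split; [left|] | exists x'; split; [right|]].
by case=> x' [[<-|H1] ->]; [left | right; exists x'].
Qed.

Lemma In_triples (O1 O2 O3 I1 I2 I3 : finType) (M1s : seq (op O1 I1)) (M2s : seq (op O2 I2))
  (M3s : seq (op O3 I3)) m1 m2 m3 :
  List.In m1 M1s -> List.In m2 M2s -> List.In m3 M3s -> List.In (tens3 m1 m2 m3) (triples M1s M2s M3s).
Proof.
move=> H1 H2 H3; rewrite /triples In_flatten.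
exists [seq tens3 m1 m2' m3' | m2' <- M2s, m3' <- M3s]; split.
  by rewrite In_map; exists m1.
rewrite In_flatten; exists [seq tens3 m1 m2 m3' | m3' <- M3s]; split.
  by rewrite In_map; exists m2.
by rewrite In_map; exists m3.
Qed.

Lemma In_leaves_child (J I : finType) (n : nat) (f : 'I_n -> seq (op J I)) i L :
  List.In L (f i) -> List.In L (flatten [seq f i | i <- index_enum 'I_n]).
Proof.
move=> H; rewrite In_flatten; exists (f i); split => //.
rewrite In_map; exists i; split => //.
have : i \in index_enum 'I_n by rewrite mem_index_enum.
elim: (index_enum 'I_n) => [|y r IH] //=; rewrite in_cons => /orP [/eqP->|/IH]; by [left|right].
Qed.

Lemma Tset_lt4 t : t \in Tset -> [&& (t.1.1 < 4)%N, (t.1.2 < 4)%N & (t.2 < 4)%N].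
Proof. by move: t; apply/allP. Qed.

Lemma beta_zero (o : Hout) u1 u2 u3 t : t \in Tset -> bad o u1 u2 u3 ->
  \sum_(x : Q) tv u1 x * bket t.1.1 (x, o.1.1) = 0 \/
  \sum_(x : Q) tv u2 x * bket t.1.2 (x, o.1.2) = 0 \/
  \sum_(x : Q) tv u3 x * bket t.2 (x, o.2) = 0.
Proof.
move=> Ht Hb; case/and3P: (Tset_lt4 Ht) => H1 H2 H3.
case/or4P: Hb => [Hn|/eqP E|/eqP E|/eqP E].
- have : t != lab3 o by apply/eqP => E; rewrite -E Ht in Hn.
  case: t Ht H1 H2 H3 => [[a b] c] /= _ H1 H2 H3.
  rewrite /lab3 !xpair_eqE negb_and negb_and -orbA => /or3P [h|h|h].
  + by left; apply: bket_zero => //; rewrite eq_sym h.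
  + by right; left; apply: bket_zero => //; rewrite eq_sym h.
  + by right; right; apply: bket_zero => //; rewrite eq_sym h.
- left; apply: bket_zero => //; rewrite E; case: eqP => [->|//]; by rewrite eqxx orbT.
- right; left; apply: bket_zero => //; rewrite E; case: eqP => [->|//]; by rewrite eqxx orbT.
- right; right; apply: bket_zero => //; rewrite E; case: eqP => [->|//]; by rewrite eqxx orbT.
Qed.

Lemma good_of_choi (Ls : seq (op Hout Hin)) :
  (forall x y : Hin * Hout, \sum_(L <- Ls) L x.2 x.1 * (L y.2 y.1)^* = GammaChoi x y) ->
  forall L, List.In L Ls -> good L.
Proof.
move=> HC L HL o u1 u2 u3 Hbad.
set u := prodvec (tv u1) (tv u2) (tv u3).
have K1 : \sum_(L <- Ls) rr L o u * (rr L o u)^* =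
    \sum_i \sum_j u i * (u j)^* * GammaChoi (i, o) (j, o).
  under [RHS]eq_bigr do under eq_bigr do rewrite -HC /= mulr_sumr.
  under [RHS]eq_bigr do rewrite exchange_big /=.
  rewrite [RHS]exchange_big /=; apply: eq_bigr => L' _.
  rewrite /rr rmorph_sum mulr_suml; apply: eq_bigr => i _.
  rewrite mulr_sumr; apply: eq_bigr => j _; rewrite rmorphM /=; ring.
have K2 : \sum_i \sum_j u i * (u j)^* * GammaChoi (i, o) (j, o) = 0.
  have G : forall i j, GammaChoi (i, o) (j, o) = 2^-1 * \sum_(t <- Tset)
      (bket t.1.1 (i.1.1, o.1.1) * bket t.1.2 (i.1.2, o.1.2) * bket t.2 (i.2, o.2)) *
      (bket t.1.1 (j.1.1, o.1.1) * bket t.1.2 (j.1.2, o.1.2) * bket t.2 (j.2, o.2))^*.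
    move=> i j; rewrite /GammaChoi /Gamma /regroup /=; congr (_ * _).
    apply: eq_bigr => t _; rewrite /tens3 /tensop /bproj /ketbra /= !rmorphM /=; ring.
  under eq_bigr do under eq_bigr do rewrite G mulr_sumr mulr_sumr.
  under eq_bigr do rewrite exchange_big /=.
  rewrite exchange_big /= big_seq big1 // => t Ht.
  have B : \sum_i u i * (bket t.1.1 (i.1.1, o.1.1) * bket t.1.2 (i.1.2, o.1.2) * bket t.2 (i.2, o.2)) = 0.
    rewrite (eq_bigr (fun i => (tv u1 i.1.1 * bket t.1.1 (i.1.1, o.1.1)) *
        (tv u2 i.1.2 * bket t.1.2 (i.1.2, o.1.2)) * (tv u3 i.2 * bket t.2 (i.2, o.2)))); last first.
      by move=> i _; rewrite /u /prodvec; ring.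
    rewrite (sum_tri_prod (fun x => tv u1 x * bket t.1.1 (x, o.1.1))
      (fun x => tv u2 x * bket t.1.2 (x, o.1.2)) (fun x => tv u3 x * bket t.2 (x, o.2))).
    by case: (beta_zero Ht Hbad) => [->|[->|->]]; rewrite ?mulr0 ?mul0r.
  have -> : \sum_i \sum_j u i * (u j)^* * (2^-1 *
      ((bket t.1.1 (i.1.1, o.1.1) * bket t.1.2 (i.1.2, o.1.2) * bket t.2 (i.2, o.2)) *
       (bket t.1.1 (j.1.1, o.1.1) * bket t.1.2 (j.1.2, o.1.2) * bket t.2 (j.2, o.2))^*))
    = 2^-1 * ((\sum_i u i * (bket t.1.1 (i.1.1, o.1.1) * bket t.1.2 (i.1.2, o.1.2) * bket t.2 (i.2, o.2))) *
       (\sum_j u j * (bket t.1.1 (j.1.1, o.1.1) * bket t.1.2 (j.1.2, o.1.2) * bket t.2 (j.2, o.2)))^*).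
    rewrite rmorph_sum mulr_suml mulr_sumr; apply: eq_bigr => i _.
    rewrite mulr_sumr mulr_sumr; apply: eq_bigr => j _; rewrite rmorphM /=; ring.
  by rewrite B mul0r mulr0.
have Z := psum_seq_eq0 (fun L => mul_conjC_ge0 (rr L o u)) (etrans K1 K2) HL.
by apply/eqP; rewrite -mul_conjC_eq0; apply/eqP.
Qed.


Definition sg (a u : nat) : C :=
  if (a < 2)%N then
    (if (u < 2)%N then (a == u)%:R else if (a == 1%N) && (u == 3%N) then -1 else 1)
  else
    (if (u < 2)%N then (if (a == 3%N) && (u == 1%N) then - 2^-1 else 2^-1) else (a == u)%:R).

Definition fz (a u : nat) : int :=
  if (a < 2)%N then (if (u < 2)%N then 4 * (a == u)%:Z else 4) else
    (if (u < 2)%N then 1 else 4 * (a == u)%:Z).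

Lemma tv_decomp a u : (a < 4)%N -> (u < 4)%N -> forall i,
  tv u i = sg a u * tv a i + sg (perp a) u * tv (perp a) i.
Proof.
move=> Ha Hu i; case: i => [[|[|i]] Hi] //.
- by case: a Ha => [|[|[|[|a]]]] //= _; case: u Hu => [|[|[|[|u]]]] //= _;
     rewrite /sg /=; field; rewrite ?pnatr_eq0.
- by case: a Ha => [|[|[|[|a]]]] //= _; case: u Hu => [|[|[|[|u]]]] //= _;
     rewrite /sg /=; field; rewrite ?pnatr_eq0.
Qed.

Lemma rr_lin (J I : finType) (L : op J I) o (x y z : vec I) (al be : C) :
  (forall i, x i = al * y i + be * z i) -> rr L o x = al * rr L o y + be * rr L o z.
Proof.
move=> H; rewrite /rr !mulr_sumr -big_split /=; apply: eq_bigr => i _; rewrite H; ring.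
Qed.

Lemma rr_decomp (L : op Hout Hin) o u1 u2 u3 : good L -> (u1 < 4)%N -> (u2 < 4)%N -> (u3 < 4)%N ->
  rr L o (prodvec (tv u1) (tv u2) (tv u3)) =
  sg (lab o.1.1) u1 * sg (lab o.1.2) u2 * sg (lab o.2) u3 *
  rr L o (prodvec (tv (lab o.1.1)) (tv (lab o.1.2)) (tv (lab o.2))).
Proof.
move=> HL H1 H2 H3.
set a := lab o.1.1; set b := lab o.1.2; set c := lab o.2.
have Ha : (a < 4)%N by apply: lab_lt4.
have Hb : (b < 4)%N by apply: lab_lt4.
have Hc : (c < 4)%N by apply: lab_lt4.
rewrite (@rr_lin _ _ L o _ (prodvec (tv a) (tv u2) (tv u3)) (prodvec (tv (perp a)) (tv u2) (tv u3))
   (sg a u1) (sg (perp a) u1)); last first.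
  by move=> i; rewrite /prodvec (tv_decomp Ha H1); ring.
rewrite [X in _ + _ * X]HL ?mulr0 ?addr0; last by rewrite /bad eqxx orbT.
rewrite (@rr_lin _ _ L o _ (prodvec (tv a) (tv b) (tv u3)) (prodvec (tv a) (tv (perp b)) (tv u3))
   (sg b u2) (sg (perp b) u2)); last first.
  by move=> i; rewrite /prodvec (tv_decomp Hb H2); ring.
rewrite [X in _ + _ * X]HL ?mulr0 ?addr0; last by rewrite /bad eqxx !orbT.
rewrite (@rr_lin _ _ L o _ (prodvec (tv a) (tv b) (tv c)) (prodvec (tv a) (tv b) (tv (perp c)))
   (sg c u3) (sg (perp c) u3)); last first.
  by move=> i; rewrite /prodvec (tv_decomp Hc H3); ring.
rewrite [X in _ + _ * X]HL ?mulr0 ?addr0; last by rewrite /bad eqxx !orbT.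
ring.
Qed.

Lemma sg_conj a u : (sg a u)^* = sg a u.
Proof.
rewrite /sg; repeat case: ifP => _.
all: by rewrite ?rmorphN ?fmorphV ?rmorph1 ?rmorph_nat.
Qed.

Lemma sg_sq a u : (a < 4)%N -> (u < 4)%N -> 4%:R * (sg a u * sg a u) = (fz a u)%:~R.
Proof.
by case: a => [|[|[|[|a]]]] //= _; case: u => [|[|[|[|u]]]] //= _;
   rewrite /sg /fz /=; field; rewrite ?pnatr_eq0.
Qed.

Definition phiZ (a b c u1 u2 u3 : nat) : int :=
  if (a, b, c) \in Tset then fz a u1 * fz b u2 * fz c u3 else 0.

Lemma gphi (L : op Hout Hin) o u1 u2 u3 : good L -> (u1 < 4)%N -> (u2 < 4)%N -> (u3 < 4)%N ->
  64%:R * (rr L o (prodvec (tv u1) (tv u2) (tv u3)) * (rr L o (prodvec (tv u1) (tv u2) (tv u3)))^*) =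
  (phiZ (lab o.1.1) (lab o.1.2) (lab o.2) u1 u2 u3)%:~R *
  (rr L o (prodvec (tv (lab o.1.1)) (tv (lab o.1.2)) (tv (lab o.2))) *
   (rr L o (prodvec (tv (lab o.1.1)) (tv (lab o.1.2)) (tv (lab o.2))))^*).
Proof.
move=> HL H1 H2 H3; rewrite /phiZ; case: ifP => HT; last first.
  by rewrite HL ?mul0r ?mulr0 //= /bad /lab3 HT.
rewrite rr_decomp // !rmorphM /= !sg_conj ?intrM.
rewrite -(sg_sq (lab_lt4 o.1.1) H1) -(sg_sq (lab_lt4 o.1.2) H2) -(sg_sq (lab_lt4 o.2) H3).
ring.
Qed.

Definition Gs (Ls : seq (op Hout Hin)) (u1 u2 u3 : nat) : C :=
  \sum_(L <- Ls) nrm L (prodvec (tv u1) (tv u2) (tv u3)).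

Definition S3 (F : nat -> nat -> nat -> C) : C :=
  \sum_(u1 <- iota 0 4) \sum_(u2 <- iota 0 4) \sum_(u3 <- iota 0 4) F u1 u2 u3.
Definition S3Z (F : nat -> nat -> nat -> int) : int :=
  \sum_(u1 <- iota 0 4) \sum_(u2 <- iota 0 4) \sum_(u3 <- iota 0 4) F u1 u2 u3.

Lemma eq_big_In (T : Type) (s : seq T) (F G : T -> C) :
  (forall x, List.In x s -> F x = G x) -> \sum_(x <- s) F x = \sum_(x <- s) G x.
Proof.
elim: s => [|y s IH] H; first by rewrite !big_nil.
rewrite !big_cons H; last by left.
by rewrite IH // => x Hx; apply: H; right.
Qed.

Lemma sum3_swap (T : Type) (s : seq T) (G : nat -> nat -> nat -> T -> C) :
  S3 (fun a b c => \sum_(x <- s) G a b c x) = \sum_(x <- s) S3 (fun a b c => G a b c x).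
Proof.
rewrite /S3.
under eq_bigr do under eq_bigr do rewrite exchange_big /=.
under eq_bigr do rewrite exchange_big /=.
by rewrite exchange_big.
Qed.

Lemma S3_ext (F G : nat -> nat -> nat -> C) :
  (forall a b c, (a < 4)%N -> (b < 4)%N -> (c < 4)%N -> F a b c = G a b c) -> S3 F = S3 G.
Proof.
move=> H; rewrite /S3 big_seq [RHS]big_seq; apply: eq_bigr => a; rewrite mem_iota => /andP [_ Ha].
rewrite big_seq [RHS]big_seq; apply: eq_bigr => b; rewrite mem_iota => /andP [_ Hb].
rewrite big_seq [RHS]big_seq; apply: eq_bigr => c; rewrite mem_iota => /andP [_ Hc].
by apply: H.
Qed.

Lemma cert_apply (Ls : seq (op Hout Hin)) (cf : nat -> nat -> nat -> int) :
  (forall L, List.In L Ls -> good L) ->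
  (forall a b c, (a, b, c) \in Tset -> S3Z (fun u1 u2 u3 => cf u1 u2 u3 * (fz a u1 * fz b u2 * fz c u3)) = 0) ->
  S3 (fun u1 u2 u3 => (cf u1 u2 u3)%:~R * Gs Ls u1 u2 u3) = 0.
Proof.
move=> HL Hc.
suff : 64%:R * S3 (fun u1 u2 u3 => (cf u1 u2 u3)%:~R * Gs Ls u1 u2 u3) = 0.
  by move/eqP; rewrite mulf_eq0 pnatr_eq0 /= => /eqP.
have E : forall u1 u2 u3, (u1 < 4)%N -> (u2 < 4)%N -> (u3 < 4)%N ->
   64%:R * ((cf u1 u2 u3)%:~R * Gs Ls u1 u2 u3) =
   \sum_(L <- Ls) \sum_o (cf u1 u2 u3 * phiZ (lab o.1.1) (lab o.1.2) (lab o.2) u1 u2 u3)%:~R *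
     (rr L o (prodvec (tv (lab o.1.1)) (tv (lab o.1.2)) (tv (lab o.2))) *
      (rr L o (prodvec (tv (lab o.1.1)) (tv (lab o.1.2)) (tv (lab o.2))))^*).
  move=> u1 u2 u3 H1 H2 H3; rewrite /Gs !mulr_sumr.
  apply: eq_big_In => L HLi; have gL := HL L HLi.
  rewrite /nrm !mulr_sumr; apply: eq_bigr => o _.
  by rewrite mulrCA (gphi o gL H1 H2 H3) intrM mulrA.
have -> : 64%:R * S3 (fun u1 u2 u3 => (cf u1 u2 u3)%:~R * Gs Ls u1 u2 u3) =
    S3 (fun u1 u2 u3 => 64%:R * ((cf u1 u2 u3)%:~R * Gs Ls u1 u2 u3)).
  by rewrite /S3 mulr_sumr; apply: eq_bigr => a _; rewrite mulr_sumr; apply: eq_bigr => b _;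
     rewrite mulr_sumr.
rewrite (S3_ext E) sum3_swap big1 // => L _.
rewrite (@sum3_swap _ (index_enum Hout)) big1 // => o _.
have -> : S3 (fun u1 u2 u3 => (cf u1 u2 u3 * phiZ (lab o.1.1) (lab o.1.2) (lab o.2) u1 u2 u3)%:~R *
     (rr L o (prodvec (tv (lab o.1.1)) (tv (lab o.1.2)) (tv (lab o.2))) *
      (rr L o (prodvec (tv (lab o.1.1)) (tv (lab o.1.2)) (tv (lab o.2))))^*)) =
   (S3Z (fun u1 u2 u3 => cf u1 u2 u3 * phiZ (lab o.1.1) (lab o.1.2) (lab o.2) u1 u2 u3))%:~R *
     (rr L o (prodvec (tv (lab o.1.1)) (tv (lab o.1.2)) (tv (lab o.2))) *
      (rr L o (prodvec (tv (lab o.1.1)) (tv (lab o.1.2)) (tv (lab o.2))))^*).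
  set g := (rr L o _ * _).
  rewrite /S3 /S3Z rmorph_sum mulr_suml; apply: eq_bigr => a _.
  rewrite rmorph_sum mulr_suml; apply: eq_bigr => b _.
  by rewrite rmorph_sum mulr_suml.
suff -> : S3Z (fun u1 u2 u3 => cf u1 u2 u3 * phiZ (lab o.1.1) (lab o.1.2) (lab o.2) u1 u2 u3) = 0.
  by rewrite mul0r.
case HT : ((lab o.1.1, lab o.1.2, lab o.2) \in Tset); rewrite /phiZ HT; first exact: Hc.
by rewrite /S3Z big1 // => a _; rewrite big1 // => b _; rewrite big1 // => c _; rewrite mulr0.
Qed.


Definition alphaZ (k u : nat) : int :=
  match k, u with
  | 0%N, 0%N => 1 | 0%N, 1%N => -1
  | 1%N, 2%N => 1 | 1%N, 3%N => -1
  | 2%N, 0%N => 2 | 2%N, 1%N => 2 | 2%N, 2%N => -1 | 2%N, 3%N => -1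
  | _, _ => 0 end.

Definition lamA (k v w : nat) : int :=
  match k, v, w with
  | 0%N, 0%N, 0%N => -6 | 0%N, 0%N, 1%N => 2 | 0%N, 1%N, 2%N => -3 | 0%N, 1%N, 3%N => 1
  | 0%N, 2%N, 2%N => 2 | 0%N, 3%N, 0%N => 4
  | 1%N, 0%N, 0%N => 10 | 1%N, 0%N, 1%N => 2 | 1%N, 1%N, 2%N => 5 | 1%N, 1%N, 3%N => 1
  | 1%N, 2%N, 2%N => -2 | 1%N, 3%N, 0%N => -4
  | 2%N, 0%N, 0%N => 8
  | _, _, _ => 0 end.

Definition lamB (k v w : nat) : int :=
  match k, v, w with
  | 0%N, 0%N, 0%N => -6 | 0%N, 0%N, 1%N => 2 | 0%N, 1%N, 2%N => 1 | 0%N, 1%N, 3%N => -3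
  | 0%N, 2%N, 0%N => 4 | 0%N, 3%N, 3%N => 2
  | 1%N, 0%N, 0%N => 10 | 1%N, 0%N, 1%N => 2 | 1%N, 1%N, 2%N => 1 | 1%N, 1%N, 3%N => 5
  | 1%N, 2%N, 0%N => -4 | 1%N, 3%N, 3%N => -2
  | 2%N, 0%N, 0%N => 8
  | _, _, _ => 0 end.

Definition cert0 k u1 u2 u3 := alphaZ k u1 * lamA k u2 u3.
Definition cert1 k u1 u2 u3 := alphaZ k u2 * lamB k u1 u3.
Definition cert2 k u1 u2 u3 := alphaZ k u3 * lamA k u1 u2.

Definition fsum (f : nat -> int) (s : seq nat) : int := foldr (fun x acc => f x + acc) 0 s.
Lemma fsumE (f : nat -> int) s : \sum_(x <- s) f x = fsum f s.
Proof. by elim: s => [|x s IH]; rewrite ?big_nil ?big_cons ?IH. Qed.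

Definition S3Zc (F : nat -> nat -> nat -> int) : int :=
  fsum (fun u1 => fsum (fun u2 => fsum (fun u3 => F u1 u2 u3) (iota 0 4)) (iota 0 4)) (iota 0 4).
Lemma S3ZE F : S3Z F = S3Zc F.
Proof.
rewrite /S3Z /S3Zc fsumE; congr fsum; apply: functional_extensionality => u1.
rewrite fsumE; congr fsum; apply: functional_extensionality => u2.
by rewrite fsumE.
Qed.

Definition chk (cf : nat -> nat -> nat -> int) : bool :=
  all (fun t => S3Zc (fun u1 u2 u3 => cf u1 u2 u3 * (fz t.1.1 u1 * fz t.1.2 u2 * fz t.2 u3)) == 0) Tset.

Lemma chk_ok cf : chk cf -> forall a b c, (a, b, c) \in Tset ->
  S3Z (fun u1 u2 u3 => cf u1 u2 u3 * (fz a u1 * fz b u2 * fz c u3)) = 0.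
Proof. by move=> /allP H a b c /H /eqP; rewrite S3ZE. Qed.

Lemma chk0 k : (k < 3)%N -> chk (cert0 k).
Proof. by case: k => [|[|[|k]]] //; vm_compute. Qed.
Lemma chk1 k : (k < 3)%N -> chk (cert1 k).
Proof. by case: k => [|[|[|k]]] //; vm_compute. Qed.
Lemma chk2 k : (k < 3)%N -> chk (cert2 k).
Proof. by case: k => [|[|[|k]]] //; vm_compute. Qed.

Definition wt (u : nat) : C := if (u < 2)%N then 1 else 2.

Lemma iota04 : iota 0 4 = [:: 0; 1; 2; 3]%N.
Proof. by []. Qed.

Lemma fin_rel (N : nat -> C) (c : C) : c != 0 ->
  (N 0%N - N 1%N) * c = 0 -> (N 2%N - N 3%N) * c = 0 ->
  (2 * N 0%N + 2 * N 1%N - N 2%N - N 3%N) * c = 0 ->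
  forall u, (u < 4)%N -> N u = wt u * N 0%N.
Proof.
move=> hc; move/eqP; rewrite mulf_eq0 (negbTE hc) orbF subr_eq0 => /eqP E01.
move/eqP; rewrite mulf_eq0 (negbTE hc) orbF subr_eq0 => /eqP E23.
move/eqP; rewrite mulf_eq0 (negbTE hc) orbF => /eqP E.
rewrite -E01 -E23 in E.
have E2 : N 2%N = 2 * N 0%N.
  have H : N 2%N - 2 * N 0%N = - 2^-1 * (2 * N 0%N + 2 * N 0%N - N 2%N - N 2%N).
    by field.
  by apply/eqP; rewrite -subr_eq0 H E mulr0.
by case=> [|[|[|[|u]]]] // _; rewrite /wt /= ?mul1r // -?E23 -?E01.
Qed.

Lemma node0 (Ls : seq (op Hout Hin)) (N : nat -> C) (c2 c3 : C) :
  (forall L, List.In L Ls -> good L) ->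
  (forall u1 u2 u3, (u1 < 4)%N -> (u2 < 4)%N -> (u3 < 4)%N ->
     Gs Ls u1 u2 u3 = N u1 * (wt u2 * c2) * (wt u3 * c3)) ->
  c2 != 0 -> c3 != 0 -> forall u, (u < 4)%N -> N u = wt u * N 0%N.
Proof.
move=> HL HG h2 h3.
have R : forall k, (k < 3)%N ->
    S3 (fun u1 u2 u3 => (cert0 k u1 u2 u3)%:~R * (N u1 * (wt u2 * c2) * (wt u3 * c3))) = 0.
  move=> k hk; rewrite -(cert_apply HL (chk_ok (chk0 hk))); apply: S3_ext => a b c ha hb hc.
  by rewrite HG.
have E0 := R 0%N isT; have E1 := R 1%N isT; have E2 := R 2%N isT.
move: E0 E1 E2; rewrite /S3 iota04 !big_cons !big_nil /cert0 !intrM /wt /= => E0 E1 E2.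
have hc : 8 * c2 * c3 != 0 by rewrite !mulf_neq0 // pnatr_eq0.
apply: (fin_rel hc).
- by rewrite -[RHS]E0; ring.
- by rewrite -[RHS]E1; ring.
- by rewrite -[RHS]E2; ring.
Qed.

Lemma node1 (Ls : seq (op Hout Hin)) (N : nat -> C) (c1 c3 : C) :
  (forall L, List.In L Ls -> good L) ->
  (forall u1 u2 u3, (u1 < 4)%N -> (u2 < 4)%N -> (u3 < 4)%N ->
     Gs Ls u1 u2 u3 = (wt u1 * c1) * N u2 * (wt u3 * c3)) ->
  c1 != 0 -> c3 != 0 -> forall u, (u < 4)%N -> N u = wt u * N 0%N.
Proof.
move=> HL HG h1 h3.
have R : forall k, (k < 3)%N ->
    S3 (fun u1 u2 u3 => (cert1 k u1 u2 u3)%:~R * ((wt u1 * c1) * N u2 * (wt u3 * c3))) = 0.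
  move=> k hk; rewrite -(cert_apply HL (chk_ok (chk1 hk))); apply: S3_ext => a b c ha hb hc.
  by rewrite HG.
have E0 := R 0%N isT; have E1 := R 1%N isT; have E2 := R 2%N isT.
move: E0 E1 E2; rewrite /S3 iota04 !big_cons !big_nil /cert1 !intrM /wt /= => E0 E1 E2.
have hc : 8 * c1 * c3 != 0 by rewrite !mulf_neq0 // pnatr_eq0.
apply: (fin_rel hc).
- by rewrite -[RHS]E0; ring.
- by rewrite -[RHS]E1; ring.
- by rewrite -[RHS]E2; ring.
Qed.

Lemma node2 (Ls : seq (op Hout Hin)) (N : nat -> C) (c1 c2 : C) :
  (forall L, List.In L Ls -> good L) ->
  (forall u1 u2 u3, (u1 < 4)%N -> (u2 < 4)%N -> (u3 < 4)%N ->
     Gs Ls u1 u2 u3 = (wt u1 * c1) * (wt u2 * c2) * N u3) ->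
  c1 != 0 -> c2 != 0 -> forall u, (u < 4)%N -> N u = wt u * N 0%N.
Proof.
move=> HL HG h1 h2.
have R : forall k, (k < 3)%N ->
    S3 (fun u1 u2 u3 => (cert2 k u1 u2 u3)%:~R * ((wt u1 * c1) * (wt u2 * c2) * N u3)) = 0.
  move=> k hk; rewrite -(cert_apply HL (chk_ok (chk2 hk))); apply: S3_ext => a b c ha hb hc.
  by rewrite HG.
have E0 := R 0%N isT; have E1 := R 1%N isT; have E2 := R 2%N isT.
move: E0 E1 E2; rewrite /S3 iota04 !big_cons !big_nil /cert2 !intrM /wt /= => E0 E1 E2.
have hc : 8 * c1 * c2 != 0 by rewrite !mulf_neq0 // pnatr_eq0.
apply: (fin_rel hc).
- by rewrite -[RHS]E0; ring.
- by rewrite -[RHS]E1; ring.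
- by rewrite -[RHS]E2; ring.
Qed.


Definition Inv (J : finType) (Ms : seq (op J Q)) : Prop :=
  forall u, (u < 4)%N -> Nk Ms (tv u) = wt u * Nk Ms (tv 0).

Definition lat (b c : nat) : nat :=
  match b, c with
  | 0%N, 0%N => 0 | 0%N, 1%N => 2 | 0%N, 2%N => 3 | 0%N, _ => 1
  | 1%N, 0%N => 3 | 1%N, 1%N => 1 | 1%N, 2%N => 0 | 1%N, _ => 2
  | 2%N, 0%N => 1 | 2%N, 1%N => 3 | 2%N, 2%N => 2 | 2%N, _ => 0
  | _, 0%N => 2 | _, 1%N => 0 | _, 2%N => 1 | _, _ => 3 end%N.

Lemma latin a b c : (a, b, c) \in Tset -> a = lat b c.
Proof.
have H : all (fun t => t.1.1 == lat t.1.2 t.2) Tset by [].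
by move/(allP H)/eqP.
Qed.

Lemma nrm_ne0 (J I : finType) (m : op J I) u : nrm m u != 0 -> exists o, rr m o u != 0.
Proof.
move/sum_seq_ne0 => [o [_ Ho]]; exists o; apply: contraNneq Ho => ->; by rewrite mul0r.
Qed.

Lemma Nk_ne0 (J I : finType) (Ms : seq (op J I)) u : Nk Ms u != 0 ->
  exists m o, List.In m Ms /\ rr m o u != 0.
Proof.
move/sum_seq_ne0 => [m [Hm /nrm_ne0 [o Ho]]]; by exists m, o.
Qed.

Lemma wt_ne0 u : wt u != 0.
Proof. by rewrite /wt; case: ifP => _; rewrite ?oner_eq0 ?pnatr_eq0. Qed.

Lemma leaf_contra (M1s M2s M3s : seq (op QQ Q)) : Inv M1s ->
  (forall L, List.In L (triples M1s M2s M3s) -> good L) ->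
  Nk M1s (tv 0) != 0 -> Nk M2s (tv 0) != 0 -> Nk M3s (tv 0) != 0 -> False.
Proof.
move=> I1 HL h1 /Nk_ne0 [m2 [o2 [Hm2 r2]]] /Nk_ne0 [m3 [o3 [Hm3 r3]]].
set p0 := perp (lat (lab o2) (lab o3)).
have Z : forall m1, List.In m1 M1s -> forall o1, rr m1 o1 (tv p0) = 0.
  move=> m1 Hm1 o1.
  have G := HL _ (In_triples Hm1 Hm2 Hm3) ((o1, o2), o3) p0 0%N 0%N.
  rewrite rr_tens3 /= in G.
  have Hb : bad ((o1, o2), o3) p0 0 0.
    rewrite /bad /lab3 /=; case: (eqVneq (lab o1) (lat (lab o2) (lab o3))) => [E|NE].
      by rewrite /p0 -E eqxx orbT.
    apply/orP; left; apply: contra NE => /latin ->; by [].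
  move: (G Hb) => /eqP; rewrite !mulf_eq0 (negbTE r2) (negbTE r3) !orbF => /eqP //.
have Z1 : Nk M1s (tv p0) = 0.
  rewrite /Nk (@eq_big_In _ _ _ (fun _ => 0)); first by rewrite big1.
  move=> m1 Hm1; rewrite /nrm big1 // => o _; by rewrite Z // mul0r.
have Hp0 : (p0 < 4)%N by rewrite /p0; case: (lat _ _) => [|[|[|[|]]]].
move: (I1 p0 Hp0); rewrite Z1 => /esym/eqP; rewrite mulf_eq0 (negbTE (wt_ne0 _)) (negbTE h1).
by [].
Qed.

Lemma In_sub_round (J I : finType) (n : nat) (f : 'I_n -> seq (op J I)) (P : op J I -> Prop) :
  (forall L, List.In L (flatten [seq f i | i <- index_enum 'I_n]) -> P L) ->
  forall i L, List.In L (f i) -> P L.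
Proof. by move=> H i L HL; apply: H; apply: In_leaves_child HL. Qed.

Lemma claim (A B D : finType) (P : locc_protocol QQ QQ QQ A B D) :
  forall (M1s : seq (op A Q)) (M2s : seq (op B Q)) (M3s : seq (op D Q)),
  Inv M1s -> Inv M2s -> Inv M3s ->
  (forall L, List.In L (leaves P M1s M2s M3s) -> good L) ->
  Nk M1s (tv 0) * Nk M2s (tv 0) * Nk M3s (tv 0) = 0.
Proof.
elim: P => {A B D} [|A B D A' n m K HK next IH|A B D A' n m K HK next IH|A B D A' n m K HK next IH]
  M1s M2s M3s I1 I2 I3 /= HL.
- case: (eqVneq (Nk M1s (tv 0)) 0) => [->|h1]; first by rewrite !mul0r.
  case: (eqVneq (Nk M2s (tv 0)) 0) => [->|h2]; first by rewrite mulr0 mul0r.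
  case: (eqVneq (Nk M3s (tv 0)) 0) => [->|h3]; first by rewrite mulr0.
  by case: (leaf_contra I1 HL h1 h2 h3).
- case: (eqVneq (Nk M2s (tv 0)) 0) => [->|h2]; first by rewrite mulr0 mul0r.
  case: (eqVneq (Nk M3s (tv 0)) 0) => [->|h3]; first by rewrite mulr0.
  have Hc : forall i, Nk [seq mulop (K i j) x | x <- M1s, j <- index_enum 'I_(m i)] (tv 0) = 0.
    move=> i.
    set M1i := [seq mulop (K i j) x | x <- M1s, j <- index_enum 'I_(m i)].
    have HLi := In_sub_round HL (i := i).
    have Ii : Inv M1i.
      apply: (@node0 (leaves (next i) M1i M2s M3s) (fun u => Nk M1i (tv u)) (Nk M2s (tv 0)) (Nk M3s (tv 0)))
        => // u1 u2 u3 _ hu2 hu3.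
      by rewrite /Gs leaves_TP (I2 _ hu2) (I3 _ hu3).
    move: (IH i M1i M2s M3s Ii I2 I3 HLi) => /eqP.
    by rewrite !mulf_eq0 (negbTE h2) (negbTE h3) !orbF => /eqP.
  by rewrite -(Nk_step _ _ HK) big1 ?mul0r.
- case: (eqVneq (Nk M1s (tv 0)) 0) => [->|h1]; first by rewrite !mul0r.
  case: (eqVneq (Nk M3s (tv 0)) 0) => [->|h3]; first by rewrite mulr0.
  have Hc : forall i, Nk [seq mulop (K i j) x | x <- M2s, j <- index_enum 'I_(m i)] (tv 0) = 0.
    move=> i.
    set M2i := [seq mulop (K i j) x | x <- M2s, j <- index_enum 'I_(m i)].
    have HLi := In_sub_round HL (i := i).
    have Ii : Inv M2i.
      apply: (@node1 (leaves (next i) M1s M2i M3s) (fun u => Nk M2i (tv u)) (Nk M1s (tv 0)) (Nk M3s (tv 0)))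
        => // u1 u2 u3 hu1 _ hu3.
      by rewrite /Gs leaves_TP (I1 _ hu1) (I3 _ hu3).
    move: (IH i M1s M2i M3s I1 Ii I3 HLi) => /eqP.
    by rewrite !mulf_eq0 (negbTE h1) (negbTE h3) !orbF => /eqP.
  by rewrite -(Nk_step _ _ HK) big1 ?mulr0 ?mul0r.
- case: (eqVneq (Nk M1s (tv 0)) 0) => [->|h1]; first by rewrite !mul0r.
  case: (eqVneq (Nk M2s (tv 0)) 0) => [->|h2]; first by rewrite mulr0 mul0r.
  have Hc : forall i, Nk [seq mulop (K i j) x | x <- M3s, j <- index_enum 'I_(m i)] (tv 0) = 0.
    move=> i.
    set M3i := [seq mulop (K i j) x | x <- M3s, j <- index_enum 'I_(m i)].
    have HLi := In_sub_round HL (i := i).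
    have Ii : Inv M3i.
      apply: (@node2 (leaves (next i) M1s M2s M3i) (fun u => Nk M3i (tv u)) (Nk M1s (tv 0)) (Nk M2s (tv 0)))
        => // u1 u2 u3 hu1 hu2 _.
      by rewrite /Gs leaves_TP (I1 _ hu1) (I2 _ hu2).
    move: (IH i M1s M2s M3i I1 I2 Ii HLi) => /eqP.
    by rewrite !mulf_eq0 (negbTE h1) (negbTE h2) !orbF => /eqP.
  by rewrite -(Nk_step _ _ HK) big1 ?mulr0.
Qed.

Lemma mulop_id_r (J I : finType) (M : op J I) : mulop M (@idop I) = M.
Proof.
apply: op_ext => a b; rewrite /mulop /idop (bigD1 b) //= eqxx mulr1 big1 ?addr0 //.
by move=> j /negbTE nj; rewrite nj mulr0.
Qed.

Lemma tens3_id (I1 I2 I3 : finType) : tens3 (@idop I1) (@idop I2) (@idop I3) = @idop (tri I1 I2 I3).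
Proof.
apply: op_ext => [[[a1 a2] a3] [[b1 b2] b3]]; rewrite /tens3 /tensop /idop /= !xpair_eqE.
by case: (a1 == b1); case: (a2 == b2); case: (a3 == b3); rewrite /= ?mul1r ?mul0r.
Qed.

Lemma conjop_id (I : finType) (X : op I I) : conjop (@idop I) X = X.
Proof.
rewrite /conjop.
have -> : adjop (@idop I) = @idop I.
  by apply: op_ext => a b; rewrite /adjop /idop rmorph_nat eq_sym.
by rewrite mulop_id_l mulop_id_r.
Qed.

Lemma choi_csum (I O : finType) (Ls : seq (op O I)) (x y : I * O) :
  csum Ls (unitop x.1 y.1) x.2 y.2 = \sum_(L <- Ls) L x.2 x.1 * (L y.2 y.1)^*.
Proof.
rewrite /csum; apply: eq_bigr => L _; rewrite conjopE.
rewrite (bigD1 x.1) //= [X in _ + X]big1 ?addr0; last first.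
  by move=> i /negbTE ni; rewrite big1 // => j _; rewrite /unitop ni /= mulr0 mul0r.
rewrite (bigD1 y.1) //= [X in _ + X]big1 ?addr0; last first.
  by move=> j /negbTE nj; rewrite /unitop eqxx nj /= mulr0 mul0r.
by rewrite /unitop !eqxx mulr1.
Qed.

Lemma Nk_id u : (u < 4)%N -> Nk [:: @idop Q] (tv u) = wt u.
Proof.
  move=> hu; rewrite /Nk big_cons big_nil addr0 /nrm sum2.
  have R : forall o : Q, rr (@idop Q) o (tv u) = tv u o.
    move=> o; rewrite /rr (bigD1 o) //= big1 ?addr0 /idop ?eqxx ?mul1r //.
    by move=> i /negbTE ni; rewrite eq_sym ni mul0r.
  rewrite !R {R}; case: u hu => [|[|[|[|u]]]] //= _; rewrite /wt /= ?rmorphN ?rmorph1 ?rmorph0;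
    ring.
Qed.

Lemma Inv_id : Inv [:: @idop Q].
Proof.
move=> u hu; rewrite !Nk_id //.
by rewrite /wt /=; case: ifP => _; rewrite ?mulr1.
Qed.

Lemma part2 (Phi : qmap Hin Hout) : choi Phi = GammaChoi -> ~ finite_round_LOCC Phi.
Proof.
move=> HC [P HP].
set Ls := leaves P [:: @idop Q] [:: @idop Q] [:: @idop Q].
have HPhi : forall X, Phi X = csum Ls X.
  move=> X; rewrite -HP /Ls -map_leaves; congr (locc_map P _).
  apply: op_ext => a b; rewrite csum_triples !big_cons !big_nil !addr0 tens3_id conjop_id.
  by [].
have HG : forall x y : Hin * Hout, \sum_(L <- Ls) L x.2 x.1 * (L y.2 y.1)^* = GammaChoi x y.
  move=> x y; rewrite -HC /choi HPhi choi_csum //.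
have Hgood := good_of_choi HG.
have := claim Inv_id Inv_id Inv_id Hgood.
rewrite !Nk_id // /wt /= !mulr1 => /eqP; by rewrite oner_eq0.
Qed.


Definition r2 : C := (sqrtC 2)^-1.
Lemma r2_conj : r2^* = r2.
Proof. by rewrite geC0_conj // /r2 invr_ge0 sqrtC_ge0 ler0n. Qed.
Lemma r2_sq : r2 * r2 = 2^-1.
Proof. by rewrite /r2 -invfM -expr2 sqrtCK. Qed.

Definition tk (k : 'I_16) : nat * nat * nat := nth (0, 0, 0)%N Tset k.
Definition E1 (k : 'I_16) : op QQ Q := fun o i => r2 * bket (tk k).1.1 (i, o).
Definition E2 (k : 'I_16) : op QQ Q := fun o i => bket (tk k).1.2 (i, o).
Definition E3 (k : 'I_16) : op QQ Q := fun o i => bket (tk k).2 (i, o).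
Definition LK (k : 'I_16) : op Hout Hin := tens3 (E1 k) (E2 k) (E3 k).
Definition Phi0 : qmap Hin Hout := fun X => sumop (fun k => conjop (LK k) X).

Lemma Phi0_sep : separable3 Phi0.
Proof. by exists 16%N, E1, E2, E3. Qed.

Lemma sumop_csum16 X : Phi0 X = csum [seq LK k | k <- index_enum 'I_16] X.
Proof. by apply: op_ext => a b; rewrite /Phi0 /sumop /csum big_map. Qed.

Lemma sum16 (F : nat * nat * nat -> C) : \sum_(k < 16) F (tk k) = \sum_(t <- Tset) F t.
Proof. by rewrite (big_nth (0, 0, 0)%N) big_mkord. Qed.

Definition gprod (x y : Hin * Hout) (t : nat * nat * nat) : C :=
   bket t.1.1 (x.1.1.1, x.2.1.1) * (bket t.1.1 (y.1.1.1, y.2.1.1))^* *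
   (bket t.1.2 (x.1.1.2, x.2.1.2) * (bket t.1.2 (y.1.1.2, y.2.1.2))^*) *
   (bket t.2 (x.1.2, x.2.2) * (bket t.2 (y.1.2, y.2.2))^*).

Lemma Phi0_choi : choi Phi0 = GammaChoi.
Proof.
apply: op_ext => x y; rewrite /choi sumop_csum16 choi_csum big_map.
rewrite /GammaChoi /Gamma /regroup /=.
rewrite (eq_bigr (fun k => 2^-1 * gprod x y (tk k))); last first.
  move=> k _; rewrite /gprod /LK /tens3 /tensop /E1 /E2 /E3 /= !rmorphM /= r2_conj -r2_sq; ring.
rewrite -mulr_sumr (sum16 (gprod x y)); congr (_ * _); apply: eq_bigr => t _.

Qed.

Definition amp (x : nat) : C := if (x < 2)%N then 1 else r2.
Definition qvZ (x a : nat) : int :=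
  match x with
  | 0%N => (a == 0%N)%:Z | 1%N => (a == 1%N)%:Z | 2%N => 1
  | _ => if a == 0%N then 1 else -1 end.
Definition aZ (x : nat) : int := if (x < 2)%N then 2 else 1.

Lemma bket_val x (i : Q) (o : QQ) : (x < 4)%N ->
  bket x (i, o) = amp x * (qvZ x (val i))%:~R * (lab o == x)%:R.
Proof.
move=> hx; case: o => [[[|[|o1]] H1] [[|[|o2]] H2]] //;
case: i => [[|[|i]] Hi] //; case: x hx => [|[|[|[|x]]]] //= _;
rewrite /bket /eplus /eminus /e0 /e1 /e2 /amp /r2 /lab /=; ring.
Qed.

Lemma amp_sq x : amp x * (amp x)^* = (aZ x)%:~R * 2^-1.
Proof.
rewrite /amp /aZ; case: ifP => _; last by rewrite r2_conj r2_sq mul1r.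
by rewrite rmorph1 mulr1; field.
Qed.

Lemma lab_sum x : (x < 4)%N -> \sum_(o : QQ) (lab o == x)%:R * ((lab o == x)%:R)^* = 1 :> C.
Proof.
move=> hx; rewrite sum_pair /QQ !sum2 /lab /=.
by case: x hx => [|[|[|[|x]]]] //= _; rewrite ?rmorph1 ?rmorph0; ring.
Qed.

Definition qq (x : nat) (a b : Q) : C := \sum_(o : QQ) bket x (a, o) * (bket x (b, o))^*.

Lemma qq_val x a b : (x < 4)%N ->
  qq x a b = (aZ x)%:~R * 2^-1 * (qvZ x (val a) * qvZ x (val b))%:~R.
Proof.
move=> hx; rewrite /qq.
under eq_bigr do rewrite !bket_val // !rmorphM /= !rmorph_int.
rewrite (eq_bigr (fun o => (amp x * (amp x)^* * (qvZ x (val a))%:~R * (qvZ x (val b))%:~R) *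
   ((lab o == x)%:R * ((lab o == x)%:R)^*))); last by move=> o _; ring.
rewrite -mulr_sumr lab_sum // mulr1 amp_sq intrM; ring.
Qed.

Lemma sum_LK (k : 'I_16) (i i' : Hin) :
  \sum_(j : Hout) LK k j i * (LK k j i')^* =
  r2 * r2^* * qq (tk k).1.1 i.1.1 i'.1.1 * qq (tk k).1.2 i.1.2 i'.1.2 * qq (tk k).2 i.2 i'.2.
Proof.
rewrite /qq.
transitivity (r2 * r2^* * \sum_(j : Hout)
  (bket (tk k).1.1 (i.1.1, j.1.1) * (bket (tk k).1.1 (i'.1.1, j.1.1))^*) *
  (bket (tk k).1.2 (i.1.2, j.1.2) * (bket (tk k).1.2 (i'.1.2, j.1.2))^*) *
  (bket (tk k).2 (i.2, j.2) * (bket (tk k).2 (i'.2, j.2))^*)).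
  rewrite mulr_sumr; apply: eq_bigr => j _.
  rewrite /LK /tens3 /tensop /E1 /E2 /E3 !rmorphM /=; ring.
rewrite (sum_tri_prod
  (fun o => bket (tk k).1.1 (i.1.1, o) * (bket (tk k).1.1 (i'.1.1, o))^*)
  (fun o => bket (tk k).1.2 (i.1.2, o) * (bket (tk k).1.2 (i'.1.2, o))^*)
  (fun o => bket (tk k).2 (i.2, o) * (bket (tk k).2 (i'.2, o))^*)).
by rewrite !mulrA.
Qed.

Definition tsum (f : nat * nat * nat -> int) : int := foldr (fun t acc => f t + acc) 0 Tset.
Lemma tsumE (f : nat * nat * nat -> int) : \sum_(t <- Tset) f t = tsum f.
Proof. by rewrite /tsum; elim: Tset => [|t s IH]; rewrite ?big_nil ?big_cons ?IH. Qed.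

Definition kiterm (a1 a2 a3 b1 b2 b3 : nat) (t : nat * nat * nat) : int :=
  (aZ t.1.1 * (qvZ t.1.1 a1 * qvZ t.1.1 b1)) * (aZ t.1.2 * (qvZ t.1.2 a2 * qvZ t.1.2 b2)) *
  (aZ t.2 * (qvZ t.2 a3 * qvZ t.2 b3)).

Definition kichk : bool :=
  all (fun a1 => all (fun a2 => all (fun a3 => all (fun b1 => all (fun b2 => all (fun b3 =>
    tsum (kiterm a1 a2 a3 b1 b2 b3) == 16 * ([&& a1 == b1, a2 == b2 & a3 == b3])%:Z
  ) (iota 0 2)) (iota 0 2)) (iota 0 2)) (iota 0 2)) (iota 0 2)) (iota 0 2).
Lemma kichk_ok : kichk.
Proof. by vm_compute. Qed.

Lemma Tset_lt4' t : t \in Tset -> [/\ (t.1.1 < 4)%N, (t.1.2 < 4)%N & (t.2 < 4)%N].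
Proof. by move/Tset_lt4/and3P. Qed.

Lemma KI (i i' : Hin) : \sum_(k < 16) \sum_(j : Hout) LK k j i * (LK k j i')^* = (i == i')%:R.
Proof.
under eq_bigr do rewrite sum_LK r2_conj r2_sq.
pose F (t : nat * nat * nat) := 2^-1 * qq t.1.1 i.1.1 i'.1.1 * qq t.1.2 i.1.2 i'.1.2 * qq t.2 i.2 i'.2.
rewrite (sum16 F) /F big_seq.
rewrite (eq_bigr (fun t => (2^-1)^+4 *
   (kiterm (val i.1.1) (val i.1.2) (val i.2) (val i'.1.1) (val i'.1.2) (val i'.2) t)%:~R)); last first.
  move=> t /Tset_lt4' [h1 h2 h3]; rewrite !qq_val // /kiterm !intrM; ring.
rewrite -big_seq -mulr_sumr -rmorph_sum tsumE.
have iota2 : forall j : Q, val j \in iota 0 2 by move=> j; rewrite mem_iota ltn_ord.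
have := kichk_ok; rewrite /kichk.
move/allP/(_ _ (iota2 i.1.1))/allP/(_ _ (iota2 i.1.2))/allP/(_ _ (iota2 i.2)).
move/allP/(_ _ (iota2 i'.1.1))/allP/(_ _ (iota2 i'.1.2))/allP/(_ _ (iota2 i'.2))/eqP ->.
rewrite !val_eqE rmorphM /=.
clear F; case: i i' => [[i1 i2] i3] [[j1 j2] j3] /=; rewrite !xpair_eqE /=.
by case: (i1 == j1); case: (i2 == j2); case: (i3 == j3); rewrite /= ?mulr0 //; field.
Qed.

Lemma Phi0_TP : trace_preserving Phi0.
Proof.
move=> X; rewrite /traceop /Phi0 /sumop.
under eq_bigr do under eq_bigr do rewrite conjopE.
have E : forall j (k : 'I_16), \sum_i \sum_i' LK k j i * X i i' * (LK k j i')^* =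
   \sum_i \sum_i' X i i' * (LK k j i * (LK k j i')^*).
  by move=> j k; apply: eq_bigr => i _; apply: eq_bigr => i' _; ring.
under eq_bigr do under eq_bigr do rewrite E.
rewrite sum4_swap.
rewrite (eq_bigr (fun i => \sum_i' X i i' * (i == i')%:R)); last first.
  move=> i _; apply: eq_bigr => i' _.
  rewrite exchange_big /= -(KI i i') mulr_sumr; apply: eq_bigr => k _.
  by rewrite mulr_sumr.
apply: eq_bigr => i _; rewrite (bigD1 i) //= eqxx mulr1 big1 ?addr0 //.
by move=> i' /negbTE ni; rewrite eq_sym ni mulr0.
Qed.

Lemma Phi0_lin : linear_qmap Phi0.
Proof.
move=> a X Y; apply: op_ext => j j'; rewrite /Phi0 /sumop /addop /scaleop.
rewrite mulr_sumr -big_split; apply: eq_bigr => k _ /=.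
rewrite !conjopE mulr_sumr -big_split; apply: eq_bigr => i _ /=.
rewrite mulr_sumr -big_split; apply: eq_bigr => i' _ /=; ring.
Qed.

Lemma amplE (LK : 'I_16 -> op Hout Hin) (n : nat) (X : op ('I_n * Hin)%type ('I_n * Hin)%type) x y :
  ampl (fun X => sumop (fun k => conjop (LK k) X)) X x y =
  \sum_(k < 16) \sum_p \sum_q LK k x.2 p * X (x.1, p) (y.1, q) * (LK k y.2 q)^*.
Proof. by rewrite /ampl /sumop; apply: eq_bigr => k _; rewrite conjopE. Qed.

Lemma CP_kraus (LK : 'I_16 -> op Hout Hin) : completely_positive (fun X => sumop (fun k => conjop (LK k) X)).
Proof.
move=> n X [HH HP]; split.
  move=> x y; rewrite !amplE rmorph_sum; apply: eq_bigr => k _.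
  rewrite rmorph_sum exchange_big /=; apply: eq_bigr => p _.
  rewrite rmorph_sum; apply: eq_bigr => q _.
  by rewrite !rmorphM /= conjCK -HH; ring.
move=> v.
pose w (k : 'I_16) : vec ('I_n * Hin)%type := fun z => \sum_o (LK k o z.2)^* * v (z.1, o).
have E : \sum_x \sum_y (v x)^* * ampl (fun X => sumop (fun k => conjop (LK k) X)) X x y * v y =
    \sum_(k < 16) \sum_z \sum_z' (w k z)^* * X z z' * w k z'.
  under eq_bigr do under eq_bigr do rewrite amplE mulr_sumr mulr_suml.
  under eq_bigr do rewrite exchange_big /=.
  rewrite exchange_big /=; apply: eq_bigr => k _.
  have L : forall x y, (v x)^* * (\sum_p \sum_q LK k x.2 p * X (x.1, p) (y.1, q) * (LK k y.2 q)^*) * v y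
     = \sum_p \sum_q (v x)^* * LK k x.2 p * X (x.1, p) (y.1, q) * (LK k y.2 q)^* * v y.
    move=> x y; rewrite mulr_sumr mulr_suml; apply: eq_bigr => p _.
    rewrite mulr_sumr mulr_suml; apply: eq_bigr => q _; ring.
  under eq_bigr do under eq_bigr do rewrite L.
  have R : forall z z', (w k z)^* * X z z' * w k z' =
     \sum_o \sum_o' (v (z.1, o))^* * LK k o z.2 * X z z' * (LK k o' z'.2)^* * v (z'.1, o').
    move=> z z'; rewrite /w rmorph_sum !mulr_suml; apply: eq_bigr => o _.
    rewrite mulr_sumr; apply: eq_bigr => o' _; rewrite rmorphM /= conjCK; ring.
  under [RHS]eq_bigr do under eq_bigr do rewrite R.
  rewrite !sum_pair.
  under eq_bigr do under eq_bigr do rewrite sum_pair.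
  under [RHS]eq_bigr do under eq_bigr do rewrite sum_pair.
  under eq_bigr do rewrite exchange_big /=.
  under eq_bigr do under eq_bigr do rewrite sum4_swap.
  apply: eq_bigr => n1 _.
  rewrite [RHS]exchange_big /=; apply: eq_bigr => n2 _.
  by [].
rewrite E; apply: sumr_ge0 => k _; exact: HP.
Qed.

Theorem part1 : exists Phi : qmap Hin Hout, choi Phi = GammaChoi /\ CPTP Phi /\ separable3 Phi.
Proof.
exists Phi0; split; first exact: Phi0_choi.
split; last exact: Phi0_sep.
split; [exact: Phi0_lin | exact: (CP_kraus LK) | exact: Phi0_TP].
Qed.


Theorem mainTheorem19 :
  (exists Phi : qmap Hin Hout,
      choi Phi = GammaChoi /\ CPTP Phi /\ separable3 Phi) /\
  (forall Phi : qmap Hin Hout,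
      linear_qmap Phi -> choi Phi = GammaChoi -> ~ finite_round_LOCC Phi).
Proof.
split; first exact: part1.
by move=> Phi _ HC; exact: part2 HC.
Qed.
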